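(* Let $\Gamma=(\gamma_{i,j})\in\mathcal{M}_n(\mathbb{R})$ be symmetric with entries in $[0,1]$, zero diagonal, and at least one strictly positive off-diagonal entry in each row. Let $\boldsymbol{\eta}=\Gamma\mathbf{1}_n$, $L=\operatorname{diag}(\boldsymbol{\eta})-\Gamma$, let $\lambda,\mu>0$, and $A=(a_{i,j})=\lambda\mathsf{I}_n+\mu L$. Define $\mathsf{P}_a\coloneqq\lambda\mathsf{I}_n+\mu\operatorname{diag}(\boldsymbol{\eta})$ and $\mathsf{P}_b\coloneqq\operatorname{diag}\big([\sum_{j=1}^n a_{i,j}^2]^{1/2}\big)_{i=1,\dots,n}$. Then every eigenvalue $\theta$ of $\mathsf{P}_b^{-1}A$ satisfies \[ 2^{-1/2}\,\lambda_{\min}(\mathsf{P}_a^{-1}A)\le\theta\le\lambda_{\max}(\mathsf{P}_a^{-1}A). \]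
   Context: $\mathbf{1}_n$ is the all-ones vector and $\mathsf{I}_n$ the identity. $\lambda_{\min}(M)$ and $\lambda_{\max}(M)$ denote the smallest and largest eigenvalues of $M$ (the matrices $\mathsf{P}^{-1}A$ here are similar to symmetric positive definite matrices, so their eigenvalues are real and positive). *)

(* Defs.v *)
From mathcomp Require Import all_boot all_order all_algebra.
Set Implicit Arguments. Unset Strict Implicit. Unset Printing Implicit Defensive.
Import Order.TTheory GRing.Theory Num.Theory.
Local Open Scope ring_scope.

(* Eigenvalues are those of
   mxalgebra ([eigenvalue M a] : there is a nonzero v with v *m M = a *: v). *)
Definition is_lambda_min (R : realFieldType) (n : nat) (M : 'M[R]_n) (m : R) :=
  eigenvalue M m /\ forall t, eigenvalue M t -> m <= t.

Definition is_lambda_max (R : realFieldType) (n : nat) (M : 'M[R]_n) (m : R) :=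
  eigenvalue M m /\ forall t, eigenvalue M t -> t <= m.

(* Main.v *)
Require Import Defs.
From mathcomp Require Import all_boot all_order all_algebra.
From mathcomp Require Import complex sesquilinear spectral lra.
Set Implicit Arguments. Unset Strict Implicit. Unset Printing Implicit Defensive.
Import Order.TTheory GRing.Theory Num.Theory.
Local Open Scope ring_scope.

Module RayL.
Local Open Scope sesquilinear_scope.

Section Ray.
Variable R : rcfType.
Local Notation C := (complex R).
Local Notation f := (real_complex R).

Lemma f_real (r : R) : f r \is Num.real.
Proof. by apply/complex_realP; exists r. Qed.

Lemma f_conj (r : R) : (f r)^* = f r.
Proof. exact: conj_Creal (f_real r). Qed.

Lemma f_le (a b : R) : (f a <= f b) = (a <= b).
Proof. exact: lecR. Qed.

Lemma eig_transfer n (S : 'M[R]_n) (z : C) : z \is Num.real ->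
  eigenvalue (map_mx f S) z -> eigenvalue S (complex.Re z).
Proof.
move=> zr; have E : f (complex.Re z) = z by exact: RRe_real.
rewrite !eigenvalue_root_char -(fmorph_root f) map_char_poly.
by rewrite -{1}E.
Qed.

Lemma herm_f n (S : 'M[R]_n) : S^T = S -> map_mx f S \is hermsymmx.
Proof.
move=> sS; apply/is_hermitianmxP; rewrite expr0 scale1r.
apply/matrixP=> i j; rewrite !mxE f_conj.
by rewrite -[in LHS]sS mxE.
Qed.

Lemma eig_spec n (SC : 'M[C]_n) (j : 'I_n) : SC \is hermsymmx ->
  eigenvalue SC (spectral_diag SC 0 j).
Proof.
move=> /hermitian_normalmx/orthomx_spectralP HU.
set U := spectralmx SC in HU; set d := spectral_diag SC in HU *.
have Uu : U \in unitmx by exact: spectral_unit.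
apply/eigenvalueP; exists (row j U).
  rewrite -row_mul {1}HU !mulmxA mulmxV // mul1mx row_mul row_diag_mx.
  by rewrite -scalemxAl -rowE.
apply/eqP => /(congr1 (mulmx^~ (invmx U))); rewrite -row_mul mulmxV // mul0mx.
move=> /matrixP /(_ 0 j); rewrite !mxE eqxx /= => /eqP.
by rewrite oner_eq0.
Qed.

Lemma quad_spec n (SC : 'M[C]_n) (x : 'rV[C]_n) : SC \is hermsymmx ->
  let U := spectralmx SC in let d := spectral_diag SC in let y := x *m U^t* in
  (x *m SC *m x^t*) 0 0 = \sum_j d 0 j * (y 0 j * (y 0 j)^*) /\
  (x *m x^t*) 0 0 = \sum_j y 0 j * (y 0 j)^*.
Proof.
move=> /hermitian_normalmx/orthomx_spectralP HU U d y.
have Uu : U \is unitarymx by exact: spectral_unitarymx.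
have Uinv : invmx U = U^t* by exact: invmx_unitary.
have Hy : U *m x^t* = y^t* by rewrite /y trmx_mul map_mxM trmxCK.
split.
  rewrite HU -/U -/d Uinv !mulmxA -/y -!mulmxA Hy mulmxA -/y mulmxA mul_mx_diag mxE.
  by apply: eq_bigr => j _; rewrite !mxE mulrA [_ * d 0 j]mulrC.
rewrite -{1}(mulmx1 x) -(mulVmx (spectral_unit SC)) -/U Uinv.
rewrite !mulmxA -/y -mulmxA Hy mxE.
by apply: eq_bigr => j _; rewrite !mxE.
Qed.

Lemma rayleigh n (S : 'M[R]_n) (x : 'rV[R]_n) : S^T = S -> x != 0 ->
  exists a b, [/\ eigenvalue S a, eigenvalue S b,
    a * (x *m x^T) 0 0 <= (x *m S *m x^T) 0 0 &
    (x *m S *m x^T) 0 0 <= b * (x *m x^T) 0 0].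
Proof.
move=> sS; case: n S x sS => [|n] S x sS xn0.
  by move: xn0; rewrite (thinmx0 x) eqxx.
set SC := map_mx f S; have h : SC \is hermsymmx by exact: herm_f.
set xC := map_mx f x.
have hxC : xC^t* = map_mx f x^T.
  by apply/matrixP => i j; rewrite !mxE f_conj.
have E1 : f ((x *m S *m x^T) 0 0) = (xC *m SC *m xC^t*) 0 0.
  by rewrite hxC /xC /SC -!map_mxM [RHS]mxE.
have E2 : f ((x *m x^T) 0 0) = (xC *m xC^t*) 0 0.
  by rewrite hxC /xC -!map_mxM [RHS]mxE.
have [Q1 Q2] := quad_spec xC h.
set U := spectralmx SC in Q1 Q2; set d := spectral_diag SC in Q1 Q2.
set y := xC *m U^t* in Q1 Q2.
have dr j : d 0 j \is Num.real.
  by have /mxOverP := hermitian_spectral_diag_real h; apply.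
pose r j := complex.Re (d 0 j).
have fr j : f (r j) = d 0 j by exact: RRe_real.
have eigr j : eigenvalue S (r j) by apply: eig_transfer (dr j) (eig_spec _ h).
have [jM _ HM] := @arg_maxP _ R _ ord0 xpredT r isT.
have [jm _ Hm] := @arg_minP _ R _ ord0 xpredT r isT.
exists (r jm), (r jM); split => //.
  rewrite -f_le rmorphM /= E1 E2 Q1 Q2 mulr_sumr; apply: ler_sum => j _.
  by rewrite ler_wpM2r ?mul_conjC_ge0 // -fr f_le; apply: Hm.
rewrite -f_le rmorphM /= E1 E2 Q1 Q2 mulr_sumr; apply: ler_sum => j _.
by rewrite ler_wpM2r ?mul_conjC_ge0 // -fr f_le; apply: HM.
Qed.

End Ray.
End RayL.

Section Helpers.
Variable R : rcfType.

Lemma qf_diag n (e x : 'rV[R]_n) :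
  (x *m diag_mx e *m x^T) 0 0 = \sum_i e 0 i * x 0 i ^+ 2.
Proof.
rewrite mul_mx_diag mxE; apply: eq_bigr => i _; rewrite !mxE.
by rewrite expr2 mulrA [x 0 i * _]mulrC.
Qed.

Lemma wsum_gt0 n (e : 'I_n -> R) (x : 'rV[R]_n) : x != 0 -> (forall i, 0 < e i) ->
  0 < \sum_i e i * x 0 i ^+ 2.
Proof.
move=> xn0 ep.
have [i xi] : exists i, x 0 i != 0.
  case: (pickP (fun i => x 0 i != 0)) => [i xi|H]; first by exists i.
  move: xn0; suff -> : x = 0 by rewrite eqxx.
  apply/matrixP => a b; rewrite ord1 mxE; by move: (H b) => /= /negbFE/eqP.
rewrite (bigD1 i) //=.
have h1 : 0 < e i * x 0 i ^+ 2.
  by rewrite mulr_gt0 // lt_def sqrf_eq0 xi sqr_ge0.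
have h2 : 0 <= \sum_(j | j != i) e j * x 0 j ^+ 2.
  by apply: sumr_ge0 => j _; rewrite mulr_ge0 ?sqr_ge0 // ltW.
lra.
Qed.

Lemma diag_inv n (e : 'rV[R]_n) : (forall i, e 0 i != 0) ->
  diag_mx e *m diag_mx (\row_i (e 0 i)^-1) = 1%:M.
Proof.
move=> h; rewrite mulmx_diag; apply/matrixP => i j; rewrite !mxE divff //.
Qed.

End Helpers.

Theorem lemma4p9 (R : rcfType) (n : nat) (Gamma : 'M[R]_n) (lambda mu : R)
  (Hsym : Gamma^T = Gamma)
  (Hrange : forall i j, 0 <= Gamma i j <= 1)
  (Hdiag : forall i, Gamma i i = 0)
  (Hrow : forall i, exists j, (j != i) && (0 < Gamma i j))
  (Hlambda : 0 < lambda) (Hmu : 0 < mu) :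
  let eta : 'cV[R]_n := Gamma *m const_mx 1 in
  let L : 'M[R]_n := diag_mx eta^T - Gamma in
  let A : 'M[R]_n := lambda%:M + mu *: L in
  let Pa : 'M[R]_n := lambda%:M + mu *: diag_mx eta^T in
  let Pb : 'M[R]_n :=
    diag_mx (\row_i Num.sqrt (\sum_j (A i j) ^+ 2)) in
  forall theta lmin lmax,
    eigenvalue (invmx Pb *m A) theta ->
    is_lambda_min (invmx Pa *m A) lmin ->
    is_lambda_max (invmx Pa *m A) lmax ->
    (Num.sqrt 2)^-1 * lmin <= theta /\ theta <= lmax.
Proof.
move=> eta L A Pa Pb theta lmin lmax Hth [Hmin1 Hmin2] [Hmax1 Hmax2].
pose dv i := lambda + mu * eta i 0.
have etaE i : eta i 0 = \sum_j Gamma i j.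
  by rewrite /eta mxE; apply: eq_bigr => j _; rewrite mxE mulr1.
have G0 i j : 0 <= Gamma i j by case/andP: (Hrange i j).
have eta0 i : 0 <= eta i 0 by rewrite etaE sumr_ge0.
have Geta i j : Gamma i j <= eta i 0.
  rewrite etaE (bigD1 j) //= lerDl; exact: sumr_ge0.
have dvpos i : 0 < dv i by rewrite /dv; apply: ltr_wpDr => //; rewrite mulr_ge0 // ltW.
have AE i j : A i j = dv i *+ (i == j) - mu * Gamma i j.
  rewrite /A /L /dv !mxE; case: eqVneq => [->|_]; rewrite ?Hdiag /=.
    by rewrite mulr0 subr0 !mulr1n subr0.
  by rewrite !mulr0n add0r sub0r mulrN sub0r.
have GS i j : Gamma j i = Gamma i j by rewrite -[in LHS]Hsym mxE.
have AT : A^T = A.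
  apply/matrixP => i j; rewrite mxE !AE GS; case: eqVneq => [->|] //.
have PaE : Pa = diag_mx (\row_i dv i).
  apply/matrixP => i j; rewrite /Pa /dv !mxE; case: eqVneq => [->|_] //=.
  by rewrite !mulr0n mulr0 addr0.
pose p i := Num.sqrt (\sum_j A i j ^+ 2).
have sumsqE i : \sum_j A i j ^+ 2 = dv i ^+ 2 + mu ^+ 2 * \sum_j Gamma i j ^+ 2.
  rewrite (bigD1 i) //= AE eqxx Hdiag mulr0 subr0 mulr1n.
  rewrite [X in _ = _ + _ * X](bigD1 i) //= Hdiag expr0n add0r mulr_sumr.
  congr (_ + _); apply: eq_bigr => j ji; rewrite AE eq_sym (negbTE ji).
  by rewrite mulr0n sub0r sqrrN exprMn.
have sumG i : \sum_j Gamma i j ^+ 2 <= eta i 0 ^+ 2.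
  apply: (@le_trans _ _ (\sum_j Gamma i j * eta i 0)).
    by apply: ler_sum => j _; rewrite expr2 ler_wpM2l.
  by rewrite -mulr_suml -etaE expr2.
pose s := Num.sqrt (2 : R).
have s0 : 0 < s by rewrite sqrtr_gt0.
have pge i : dv i <= p i.
  rewrite -[X in X <= _]ger0_norm ?(ltW (dvpos i)) // -sqrtr_sqr /p ler_sqrt.
    by rewrite sumsqE lerDl mulr_ge0 ?sqr_ge0 ?sumr_ge0 // => j _; rewrite sqr_ge0.
  by rewrite sumr_ge0 // => j _; rewrite sqr_ge0.
have ple i : p i <= s * dv i.
  rewrite -[X in _ <= _ * X]ger0_norm ?(ltW (dvpos i)) // -sqrtr_sqr /s -sqrtrM //.
  rewrite /p ler_sqrt; last by rewrite mulr_ge0 ?sqr_ge0.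
  rewrite sumsqE.
  have := sumG i; have := eta0 i; have := dvpos i; rewrite /dv.
  move: (\sum_j _) (eta i 0) => g e h1 h2 h3.
  have h4 : mu ^+ 2 * g <= mu ^+ 2 * e ^+ 2 by rewrite ler_wpM2l ?sqr_ge0.
  have h5 : 0 <= lambda * (mu * e) by rewrite mulr_ge0 ?mulr_ge0 // ltW.
  have h6 : 0 <= lambda ^+ 2 by rewrite sqr_ge0.
  nra.
have PbU : Pb \in unitmx.
  have h : forall i, (\row_i p i) 0 i != 0.
    by move=> i; rewrite mxE (gt_eqF (lt_le_trans (dvpos i) (pge i))).
  by case: (mulmx1_unit (diag_inv h)).
have [v Hv vn0] := eigenvalueP Hth.
set w := v *m invmx Pb.
have vw : v = w *m Pb by rewrite /w mulmxKV.
have wn0 : w != 0 by apply: contraNneq vn0 => w0; rewrite vw w0 mul0mx.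
have HwA : w *m A = theta *: (w *m Pb) by rewrite -vw /w -mulmxA.
clearbody w.
have alphaE : (w *m A *m w^T) 0 0 = theta * (w *m Pb *m w^T) 0 0.
  by rewrite HwA -scalemxAl mxE.
have AE2 : A = Pa - mu *: Gamma.
  by apply/matrixP => i j; rewrite PaE AE !mxE.
have posA (x : 'rV[R]_n) : x != 0 -> 0 < (x *m A *m x^T) 0 0.
  move=> xn0.
  have E1 : (x *m A *m x^T) 0 0 =
      (x *m Pa *m x^T) 0 0 - mu * (x *m Gamma *m x^T) 0 0.
    by rewrite AE2 mulmxBr mulmxBl -scalemxAr -scalemxAl !mxE.
  pose H := \sum_i eta i 0 * x 0 i ^+ 2.
  have H1 : \sum_j \sum_i Gamma i j * x 0 i ^+ 2 = H.
    by rewrite exchange_big; apply: eq_bigr => i _; rewrite etaE mulr_suml.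
  have H2 : \sum_j \sum_i Gamma i j * x 0 j ^+ 2 = H.
    apply: eq_bigr => j _; rewrite etaE mulr_suml.
    by apply: eq_bigr => i _; rewrite GS.
  have Gle : 2 * (x *m Gamma *m x^T) 0 0 <= H + H.
    rewrite -{1}H1 -H2 -big_split /= mxE mulr_sumr; apply: ler_sum => j _.
    rewrite mxE mulr_suml mulr_sumr -big_split /=; apply: ler_sum => i _.
    rewrite !mxE.
    have := G0 i j; have : 0 <= Gamma i j * (x 0 i - x 0 j) ^+ 2.
      by rewrite mulr_ge0 ?sqr_ge0.
    move: (Gamma i j) (x 0 i) (x 0 j) => g a b h1 h2.
    nra.
  have E3 : (x *m Pa *m x^T) 0 0 = \sum_i lambda * x 0 i ^+ 2 + mu * H.
    rewrite PaE qf_diag mulr_sumr -big_split; apply: eq_bigr => i _.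
    by rewrite mxE /dv mulrDl mulrA.
  have Hl : 0 < \sum_i lambda * x 0 i ^+ 2 by apply: wsum_gt0.
  have Gle2 : mu * (x *m Gamma *m x^T) 0 0 <= mu * H.
    by apply: ler_wpM2l; [exact: ltW | lra].
  rewrite E1 E3; lra.
pose sq i := Num.sqrt (dv i).
have sqpos i : 0 < sq i by rewrite sqrtr_gt0.
pose Q : 'M[R]_n := diag_mx (\row_i (sq i)^-1).
pose Qi : 'M[R]_n := diag_mx (\row_i sq i).
have QiQ : Qi *m Q = 1%:M.
  by rewrite mulmx_diag; apply/matrixP => i j; rewrite !mxE divff // gt_eqF.
have QQi : Q *m Qi = 1%:M.
  by rewrite mulmx_diag; apply/matrixP => i j; rewrite !mxE mulVf // gt_eqF.
have QiQi : Qi *m Qi = Pa.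
  rewrite mulmx_diag PaE; apply/matrixP => i j; rewrite !mxE -expr2 sqr_sqrtr //.
  exact: ltW.
have QQPa : Pa *m (Q *m Q) = 1%:M.
  by rewrite -QiQi mulmxA -(mulmxA Qi Qi Q) QiQ mulmx1 QiQ.
have PaU : Pa \in unitmx by case: (mulmx1_unit QQPa).
have invPa : invmx Pa = Q *m Q.
  by rewrite -[RHS]mul1mx -(mulVmx PaU) -mulmxA QQPa mulmx1.
pose S := Q *m A *m Q.
have QT : Q^T = Q by rewrite /Q tr_diag_mx.
have QiT : Qi^T = Qi by rewrite /Qi tr_diag_mx.
have ST : S^T = S by rewrite /S !trmx_mul QT AT mulmxA.
have eigS a : eigenvalue S a -> eigenvalue (invmx Pa *m A) a.
  move=> /eigenvalueP [u Hu un0]; apply/eigenvalueP; exists (u *m Qi).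
    rewrite invPa scalemxAl -Hu /S !mulmxA -(mulmxA u Qi Q) QiQ mulmx1.
    by rewrite -(mulmxA _ Q Qi) QQi mulmx1.
  by apply: contraNneq un0 => h; rewrite -(mulmx1 u) -QiQ mulmxA h mul0mx.
set z := w *m Qi.
have zn0 : z != 0.
  by apply: contraNneq wn0 => h; rewrite -(mulmx1 w) -QiQ mulmxA -/z h mul0mx.
have zSz : (z *m S *m z^T) 0 0 = (w *m A *m w^T) 0 0.
  rewrite /z trmx_mul QiT /S !mulmxA -(mulmxA w Qi Q) QiQ mulmx1.
  by rewrite -(mulmxA _ Q Qi) QQi mulmx1.
have zz : (z *m z^T) 0 0 = (w *m Pa *m w^T) 0 0.
  by rewrite /z trmx_mul QiT mulmxA -(mulmxA w Qi Qi) QiQi.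
have [a [b [Ea Eb Ha Hb]]] := RayL.rayleigh ST zn0.
rewrite zSz zz in Ha Hb.
have la := Hmin2 _ (eigS _ Ea).
have lb := Hmax2 _ (eigS _ Eb).
have beta0 : 0 < (w *m Pa *m w^T) 0 0.
  rewrite PaE qf_diag; apply: wsum_gt0 => // i; rewrite mxE; exact: dvpos.
have bg : (w *m Pa *m w^T) 0 0 <= (w *m Pb *m w^T) 0 0.
  rewrite PaE qf_diag /Pb qf_diag; apply: ler_sum => i _; rewrite !mxE.
  by apply: ler_wpM2r; [exact: sqr_ge0 | exact: pge].
have gb : (w *m Pb *m w^T) 0 0 <= s * (w *m Pa *m w^T) 0 0.
  rewrite PaE qf_diag /Pb qf_diag mulr_sumr; apply: ler_sum => i _; rewrite !mxE.
  by rewrite [s * _]mulrA; apply: ler_wpM2r; [exact: sqr_ge0 | exact: ple].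
have alpha0 := posA w wn0.
move: alphaE alpha0 Ha Hb beta0 bg gb la lb.
move: ((w *m A *m w^T) 0 0) ((w *m Pa *m w^T) 0 0) ((w *m Pb *m w^T) 0 0).
move=> al be ga h1 h2 h3 h4 h5 h6 h7 h8 h9.
have ga0 : 0 < ga by lra.
have th0 : 0 < theta.
  by move: h2; rewrite h1 pmulr_lgt0.
have h10 : lmin * be <= a * be by apply: ler_wpM2r; [exact: ltW|].
have h11 : b * be <= lmax * be by apply: ler_wpM2r; [exact: ltW|].
have lm0 : 0 < lmax.
  have : 0 < lmax * be by lra.
  by rewrite pmulr_lgt0.
have h12 : lmax * be <= lmax * ga by apply: ler_wpM2l; [exact: ltW|].
have h13 : theta * ga <= theta * (s * be) by apply: ler_wpM2l; [exact: ltW|].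
split; last by rewrite -(ler_pM2r ga0); lra.
rewrite -(ler_pM2l s0) mulrA mulfV ?gt_eqF // mul1r.
rewrite -(ler_pM2r h5).
case: (lerP lmin 0) => hl.
  have : 0 <= s * theta * be by rewrite !mulr_ge0 // ltW.
  have : lmin * be <= 0 by rewrite pmulr_lle0.
  lra.
lra.
Qed.
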